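(* Let $W=I_2(5)$. Then $$\kappa^{(3)}_{\beta,\alpha}=S^{(0,3)}_\beta(y_\alpha y_\beta)-y_\alpha\,s_\beta s_\alpha s_\beta(y_\alpha),$$ $$\kappa^{(2)}_{\alpha,\beta}=-y_\beta\big\{s_\alpha(y_\alpha y_\beta)+s_\alpha s_\beta(y_\alpha y_\beta)-s_\beta s_\alpha(y_\alpha y_\beta)-s_\beta s_\alpha s_\beta(y_\alpha y_\beta)+y_\alpha s_\beta s_\alpha s_\beta(y_\alpha)-s_\alpha s_\beta(y_\alpha)\,s_\alpha s_\beta s_\alpha(y_\beta)\big\},$$ $$\begin{aligned}\kappa^{(1)}_{\beta,\alpha}=&-s_\beta(y_\alpha y_\beta)\,s_\beta s_\alpha s_\beta(y_\alpha)\big\{s_\beta s_\alpha s_\beta(y_\beta)-y_\alpha\big\}-y_\alpha y_\beta\,s_\alpha s_\beta(y_\alpha)\big\{s_\alpha s_\beta(y_\beta)-s_\alpha s_\beta s_\alpha(y_\beta)\big\}\\&-y_\alpha\,s_\beta(y_\alpha)\,s_\beta s_\alpha(y_\beta)\,s_\beta s_\alpha s_\beta(y_\alpha).\end{aligned}$$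
   Context: General setup: $W$ a finite real reflection group with root system $\Sigma$; $R$ an integral domain containing the ring $\mathcal{R}\subset\mathbb{R}$ generated by the coefficients of roots in the basis of simple roots; $F$ a one-dimensional commutative formal group law over $R$; $\mathcal{S}$ the formal root algebra (the quotient of the completed polynomial ring $R[[x_\lambda:\lambda\in\Lambda]]$, $\Lambda$ the lattice spanned by $\mathcal{R}$-multiples of roots, by the closed ideal generated by $x_0$ and the relations $x_{e_i\gamma+e_j\gamma'}=(e_ix_\gamma)+_F(e_jx_{\gamma'})$ for roots $\gamma,\gamma'$ and a fixed $\mathbb{Z}$-basis $(e_1=1,\dots,e_l)$ of $\mathcal{R}$), with $W$ acting by $w(x_\lambda)=x_{w(\lambda)}$; $\mathcal{Q}$ its localization at all $x_\gamma$; $\mathcal{Q}_W=\mathcal{Q}\otimes_RR[W]$ with left $\mathcal{Q}$-basis $\{\delta_w\}$ and product $(q\delta_w)(q'\delta_{w'})=q\,w(q')\delta_{ww'}$, $\mathbf 1=\delta_1$; $\delta_\gamma=\delta_{s_\gamma}$, $X_\gamma=\frac1{x_\gamma}(\mathbf 1-\delta_\gamma)$. Dihedral notation: $W=I_2(m)$ (here $m=5$), simple roots $\alpha,\beta$; $y_\gamma=1/x_\gamma\in\mathcal{Q}$; $W$ acts on products multiplicatively, $s(y_\gamma)=y_{s(\gamma)}$. $X^{(i)}_{\alpha\ldots}=X_\alpha X_\beta X_\alpha\cdots$ and $X^{(i)}_{\beta\ldots}$ ($i$ alternating factors); $s^{(i)}_{\beta\ldots}=s_\beta s_\alpha\cdots$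 ($i$ factors, identity for $i=0$); $S^{(0,3)}_\beta(u)=\sum_{k=0}^3s^{(k)}_{\beta\ldots}(u)$. The elements $\kappa^{(i)}_{\alpha,\beta},\kappa^{(i)}_{\beta,\alpha}\in\mathcal{Q}$ ($1\le i\le m-2$) are the unique elements with $X^{(m)}_{\alpha\ldots}-X^{(m)}_{\beta\ldots}=\sum_{i=1}^{m-2}\big(\kappa^{(i)}_{\alpha,\beta}X^{(i)}_{\alpha\ldots}-\kappa^{(i)}_{\beta,\alpha}X^{(i)}_{\beta\ldots}\big)$ (uniqueness holds because the elements $X_{I_w}$, one reduced sequence $I_w$ per $w\in W$, are linearly independent over $\mathcal{Q}$). *)

(* Defs.v *)
From HB Require Import structures.
From mathcomp Require Import all_boot all_order all_algebra all_fingroup.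
Set Implicit Arguments. Unset Strict Implicit. Unset Printing Implicit Defensive.
Import GRing.Theory.
Local Open Scope ring_scope.

(* The root system Sigma of I_2(5).  The root with index k : 'I_10 is the *)
(* unit vector at angle k*pi/5; the simple roots are alpha = index 0 and    *)
(* beta = index 4 (angle 4pi/5); the positive roots are indices 0..4.      *)
(* The reflection s_gamma in the root of index k maps the root of index j  *)
(* to the root of index (2k + 5 - j) mod 10.                               *)
Definition Iroot := 'I_10.
Definition ra : Iroot := inord 0.
Definition rb : Iroot := inord 4.

Definition refl_nat (k j : nat) : nat := (2 * k + 15 - j) %% 10.

Definition refl_fun (k : Iroot) (j : Iroot) : Iroot :=
  Ordinal (ltn_pmod (refl_nat k j) (isT : (0 < 10)%N)).

Lemma refl_nat_all :
  all (fun k => all (fun j => refl_nat k (refl_nat k j) == j) (iota 0 10)) (iota 0 10).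
Proof. by []. Qed.

Lemma refl_funK (k : Iroot) : cancel (refl_fun k) (refl_fun k).
Proof.
move=> j; apply/val_inj => /=.
have /allP /(_ (val k)) := refl_nat_all.
have Hk : val k \in iota 0 10 by rewrite mem_iota add0n ltn_ord.
move=> /(_ Hk) /allP /(_ (val j)).
have Hj : val j \in iota 0 10 by rewrite mem_iota add0n ltn_ord.
move=> /(_ Hj) /eqP E; move: E; rewrite /refl_nat !modn_mod; exact.
Qed.

Lemma refl_inj (k : Iroot) : injective (refl_fun k).
Proof. exact: can_inj (refl_funK k). Qed.

Definition refl (k : Iroot) : {perm Iroot} := perm (@refl_inj k).
Definition sa : {perm Iroot} := refl ra.
Definition sb : {perm Iroot} := refl rb.

(* W = I_2(5), realised (faithfully) as the group of permutations of Sigma *)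
(* generated by s_alpha and s_beta.                                         *)
Definition W : {group {perm Iroot}} := <<[set sa; sb]>>%G.

(* composition in W in the usual (functional) order: (wc u v) g = u (v g). *)
(* (MathComp's permutation product is left-to-right.)                     *)
Definition wc (u v : {perm Iroot}) : {perm Iroot} := (v * u)%g.

Definition W_action (Q : comUnitRingType) (act : {perm Iroot} -> Q -> Q) : Prop :=
  [/\ forall w, w \in W -> forall a b, act w (a + b) = act w a + act w b,
      forall w, w \in W -> forall a b, act w (a * b) = act w a * act w b,
      forall w, w \in W -> act w 1 = 1,
      forall a, act 1%g a = a &
      forall u v, u \in W -> v \in W -> forall a, act (wc u v) a = act u (act v a)].

Section QW.
Variables (Q : comUnitRingType) (act : {perm Iroot} -> Q -> Q) (x : Iroot -> Q).

Definition y (g : Iroot) : Q := (x g)^-1.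

Fixpoint salt (a b : {perm Iroot}) (k : nat) (u : Q) : Q :=
  match k with 0 => u | k'.+1 => act a (salt b a k' u) end.

Definition Sb03 (u : Q) : Q := \sum_(k < 4) salt sb sa k u.

(* The twisted group algebra Q_W: an element sum_w q_w delta_w is stored   *)
(* as the function w |-> q_w.                                              *)
Definition QW := {ffun {perm Iroot} -> Q}.

Definition delta (w : {perm Iroot}) : QW := [ffun v => (v == w)%:R].
Definition qw_one : QW := delta 1%g.
Definition qw_add (f g : QW) : QW := [ffun v => f v + g v].
Definition qw_sub (f g : QW) : QW := [ffun v => f v - g v].
Definition qw_scale (q : Q) (f : QW) : QW := [ffun v => q * f v].
(* (q delta_u)(q' delta_v) = q u(q') delta_{uv} *)
Definition qw_mul (f g : QW) : QW :=
  [ffun v => \sum_(u in W) \sum_(u' in W | wc u u' == v) f u * act u (g u')].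

Definition XX (g : Iroot) : QW := qw_scale (y g) (qw_sub qw_one (delta (refl g))).

Fixpoint Xalt (a b : Iroot) (n : nat) : QW :=
  match n with 0 => qw_one | n'.+1 => qw_mul (XX a) (Xalt b a n') end.

(* The defining identity of kappa^{(i)}_{alpha,beta} (= kab i) and        *)
(* kappa^{(i)}_{beta,alpha} (= kba i), 1 <= i <= m - 2 = 3:                *)
Definition kappa_eq (kab kba : nat -> Q) : Prop :=
  qw_sub (Xalt ra rb 5) (Xalt rb ra 5) =
  \big[qw_add/[ffun => 0]]_(1 <= i < 4)
     qw_sub (qw_scale (kab i) (Xalt ra rb i)) (qw_scale (kba i) (Xalt rb ra i)).

End QW.

(* Main.v *)
Require Import Defs.
Set Warnings "-notation-overridden,-ambiguous-paths".
From HB Require Import structures.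
From mathcomp Require Import all_boot all_order all_algebra all_fingroup.
From mathcomp Require Import ring.
Set Implicit Arguments. Unset Strict Implicit. Unset Printing Implicit Defensive.
Import GRing.Theory.
Local Open Scope ring_scope.

Arguments wc : simpl never.
Arguments y : simpl never.
Arguments refl : simpl never.
Arguments sa : simpl never.
Arguments sb : simpl never.
Lemma reflE (k j : Iroot) : val (refl k j) = refl_nat k j.
Proof. by rewrite /refl permE /= /refl_nat modn_mod. Qed.


Lemma wc1l u : wc 1%g u = u. Proof. by rewrite /wc mulg1. Qed.
Lemma wc1r u : wc u 1%g = u. Proof. by rewrite /wc mul1g. Qed.
Lemma reflK k : wc (refl k) (refl k) = 1%g.
Proof. by apply/permP => i; rewrite /wc permM !permE refl_funK. Qed.
Lemma wcA u v w : wc u (wc v w) = wc (wc u v) w. Proof. by rewrite /wc mulgA. Qed.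
Lemma saK u : wc sa (wc sa u) = u. Proof. by rewrite wcA reflK wc1l. Qed.
Lemma sbK u : wc sb (wc sb u) = u. Proof. by rewrite wcA reflK wc1l. Qed.
Lemma saa : wc sa sa = 1%g. Proof. exact: reflK. Qed.
Lemma sbb : wc sb sb = 1%g. Proof. exact: reflK. Qed.
Lemma braid : wc sb (wc sa (wc sb (wc sa sb))) = wc sa (wc sb (wc sa (wc sb sa))).
Proof.
apply/permP => i; rewrite /wc !permM.
apply/val_inj; rewrite !reflE /refl_nat /ra /rb !inordK //.
case: i => [[|[|[|[|[|[|[|[|[|[|//]]]]]]]]]] ?] //=.
Qed.
Lemma sa_in : sa \in W. Proof. by rewrite mem_gen // !inE eqxx. Qed.
Lemma sb_in : sb \in W. Proof. by rewrite mem_gen // !inE eqxx orbT. Qed.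
Lemma wc_in u v : u \in W -> v \in W -> wc u v \in W.
Proof. by move=> *; rewrite /wc groupM. Qed.
Lemma neqP (u w : {perm Iroot}) : u ra != w ra -> (u == w) = false.
Proof. by move=> H; apply/negbTE; apply: contra H => /eqP ->. Qed.
Lemma sa_0 : sa (inord 0) = inord 5 :> Iroot.
Proof. by apply/val_inj; rewrite reflE /refl_nat /ra /rb /= !inordK. Qed.
Lemma sa_1 : sa (inord 1) = inord 4 :> Iroot.
Proof. by apply/val_inj; rewrite reflE /refl_nat /ra /rb /= !inordK. Qed.
Lemma sa_2 : sa (inord 2) = inord 3 :> Iroot.
Proof. by apply/val_inj; rewrite reflE /refl_nat /ra /rb /= !inordK. Qed.
Lemma sa_3 : sa (inord 3) = inord 2 :> Iroot.
Proof. by apply/val_inj; rewrite reflE /refl_nat /ra /rb /= !inordK. Qed.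
Lemma sa_4 : sa (inord 4) = inord 1 :> Iroot.
Proof. by apply/val_inj; rewrite reflE /refl_nat /ra /rb /= !inordK. Qed.
Lemma sa_5 : sa (inord 5) = inord 0 :> Iroot.
Proof. by apply/val_inj; rewrite reflE /refl_nat /ra /rb /= !inordK. Qed.
Lemma sa_6 : sa (inord 6) = inord 9 :> Iroot.
Proof. by apply/val_inj; rewrite reflE /refl_nat /ra /rb /= !inordK. Qed.
Lemma sa_7 : sa (inord 7) = inord 8 :> Iroot.
Proof. by apply/val_inj; rewrite reflE /refl_nat /ra /rb /= !inordK. Qed.
Lemma sa_8 : sa (inord 8) = inord 7 :> Iroot.
Proof. by apply/val_inj; rewrite reflE /refl_nat /ra /rb /= !inordK. Qed.
Lemma sa_9 : sa (inord 9) = inord 6 :> Iroot.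
Proof. by apply/val_inj; rewrite reflE /refl_nat /ra /rb /= !inordK. Qed.
Lemma sb_0 : sb (inord 0) = inord 3 :> Iroot.
Proof. by apply/val_inj; rewrite reflE /refl_nat /ra /rb /= !inordK. Qed.
Lemma sb_1 : sb (inord 1) = inord 2 :> Iroot.
Proof. by apply/val_inj; rewrite reflE /refl_nat /ra /rb /= !inordK. Qed.
Lemma sb_2 : sb (inord 2) = inord 1 :> Iroot.
Proof. by apply/val_inj; rewrite reflE /refl_nat /ra /rb /= !inordK. Qed.
Lemma sb_3 : sb (inord 3) = inord 0 :> Iroot.
Proof. by apply/val_inj; rewrite reflE /refl_nat /ra /rb /= !inordK. Qed.
Lemma sb_4 : sb (inord 4) = inord 9 :> Iroot.
Proof. by apply/val_inj; rewrite reflE /refl_nat /ra /rb /= !inordK. Qed.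
Lemma sb_5 : sb (inord 5) = inord 8 :> Iroot.
Proof. by apply/val_inj; rewrite reflE /refl_nat /ra /rb /= !inordK. Qed.
Lemma sb_6 : sb (inord 6) = inord 7 :> Iroot.
Proof. by apply/val_inj; rewrite reflE /refl_nat /ra /rb /= !inordK. Qed.
Lemma sb_7 : sb (inord 7) = inord 6 :> Iroot.
Proof. by apply/val_inj; rewrite reflE /refl_nat /ra /rb /= !inordK. Qed.
Lemma sb_8 : sb (inord 8) = inord 5 :> Iroot.
Proof. by apply/val_inj; rewrite reflE /refl_nat /ra /rb /= !inordK. Qed.
Lemma sb_9 : sb (inord 9) = inord 4 :> Iroot.
Proof. by apply/val_inj; rewrite reflE /refl_nat /ra /rb /= !inordK. Qed.
Definition tabs := (sa_0, sa_1, sa_2, sa_3, sa_4, sa_5, sa_6, sa_7, sa_8, sa_9, sb_0, sb_1, sb_2, sb_3, sb_4, sb_5, sb_6, sb_7, sb_8, sb_9).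

Section Main.
Variables (Q : comUnitRingType) (act : {perm Iroot} -> Q -> Q) (x : Iroot -> Q).
Hypothesis Hact : W_action act.
Hypothesis Hunit : forall g : Iroot, x g \is a GRing.unit.
Hypothesis Hequiv : forall w, w \in W -> forall g : Iroot, act w (x g) = x (w g).

Lemma actD w : w \in W -> forall a b, act w (a + b) = act w a + act w b.
Proof. by case: Hact => H _ _ _ _; apply: H. Qed.
Lemma actM w : w \in W -> forall a b, act w (a * b) = act w a * act w b.
Proof. by case: Hact => _ H _ _ _; apply: H. Qed.
Lemma act1 w : w \in W -> act w 1 = 1.
Proof. by case: Hact => _ _ H _ _; apply: H. Qed.
Lemma act_id a : act 1%g a = a.
Proof. by case: Hact => _ _ _ H _; apply: H. Qed.
Lemma act0 w : w \in W -> act w 0 = 0.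
Proof.
by move=> Hw; apply: (addrI (act w 0)); rewrite -actD // !addr0.
Qed.
Lemma actN w : w \in W -> forall a, act w (- a) = - act w a.
Proof.
move=> Hw a; apply/eqP; rewrite -subr_eq0 opprK -actD // addNr act0 //.
Qed.
Lemma actB w : w \in W -> forall a b, act w (a - b) = act w a - act w b.
Proof. by move=> Hw a b; rewrite actD // actN. Qed.
Lemma actnat w (b : bool) : w \in W -> act w (b%:R) = b%:R.
Proof. by move=> Hw; case: b; rewrite ?act1 ?act0. Qed.
Lemma acty w : w \in W -> forall g, act w (y x g) = y x (w g).
Proof.
move=> Hw g; rewrite /y.
have H : act w (x g)^-1 * x (w g) = 1 by rewrite -Hequiv // -actM // mulVr ?act1.
by rewrite -[LHS]mulr1 -(mulrV (Hunit (w g))) mulrA H mul1r.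
Qed.
Lemma act_sum w (s : seq (Q * {perm Iroot})) (F : Q * {perm Iroot} -> Q) :
  w \in W -> act w (\sum_(p <- s) F p) = \sum_(p <- s) act w (F p).
Proof.
move=> Hw; elim: s => [|p s IH]; first by rewrite !big_nil act0.
by rewrite !big_cons actD // IH.
Qed.

Definition sem (L : seq (Q * {perm Iroot})) : QW Q :=
  [ffun v => \sum_(p <- L) p.1 * (v == p.2)%:R].

Definition inW (p : Q * {perm Iroot}) := p.2 \in W.

Fixpoint mulL (L1 L2 : seq (Q * {perm Iroot})) :=
  match L1 with
  | [::] => [::]
  | p :: L1' => map (fun q => (p.1 * act p.2 q.1, wc p.2 q.2)) L2 ++ mulL L1' L2
  end.

Lemma sem_cat L1 L2 : sem (L1 ++ L2) = qw_add (sem L1) (sem L2).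
Proof. by apply/ffunP => v; rewrite !ffunE big_cat. Qed.

Lemma qw_mulDl f g h : qw_mul act (qw_add f g) h = qw_add (qw_mul act f h) (qw_mul act g h).
Proof.
apply/ffunP => v; rewrite !ffunE -big_split; apply: eq_bigr => u _.
rewrite -big_split; apply: eq_bigr => u' _; by rewrite ffunE mulrDl.
Qed.

Lemma mul_single p L : inW p -> all inW L ->
  qw_mul act (sem [:: p]) (sem L) = sem (map (fun q => (p.1 * act p.2 q.1, wc p.2 q.2)) L).
Proof.
move=> Hp HL; apply/ffunP => v; rewrite !ffunE big_map.
rewrite (bigD1 p.2) //= [X in _ + X]big1 ?addr0; last first.
  move=> u /andP [_ Hu]; apply: big1 => u' _.
  by rewrite ffunE big_cons big_nil (negbTE Hu) mulr0 addr0 mul0r.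
rewrite ffunE big_cons big_nil eqxx mulr1 addr0.
rewrite /inW in Hp.
under eq_bigr => u' _ do rewrite ffunE (act_sum _ _ Hp) mulr_sumr.
rewrite exchange_big /=.
apply: eq_big_seq => q Hq.
have HqW : q.2 \in W by move/allP: HL => /(_ q Hq).
under eq_bigr => u' _ do rewrite actM // actnat // mulrA.
rewrite eq_sym; case: (boolP (wc p.2 q.2 == v)) => Hv.
  rewrite (bigD1 q.2) /=; last by rewrite HqW.
  rewrite eqxx mulr1 [X in _ + X]big1 ?addr0 //.
  move=> u' Hu. case/andP: Hu => _ Hne. by rewrite (negbTE Hne) mulr0.
rewrite big1 ?mulr0 // => u' /andP [_ Hu'].
case: (eqVneq u' q.2) Hu' => [-> | _ _]; first by rewrite (negbTE Hv).
by rewrite mulr0.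
Qed.

Lemma semE L v : sem L v = \sum_(p <- L) p.1 * (v == p.2)%:R.
Proof. by rewrite ffunE. Qed.

Lemma sem_cons p L : sem (p :: L) = qw_add (sem [:: p]) (sem L).
Proof. by rewrite -cat1s sem_cat. Qed.

Lemma inW_mulL L1 L2 : all inW L1 -> all inW L2 -> all inW (mulL L1 L2).
Proof.
elim: L1 => [|p L1 IH] //= /andP [Hp H1] H2; rewrite all_cat IH // andbT.
apply/allP => q /mapP [q' Hq' ->]; rewrite /inW /= wc_in //.
by move/allP: H2 => /(_ q' Hq').
Qed.

Lemma mul_sem L1 L2 : all inW L1 -> all inW L2 ->
  qw_mul act (sem L1) (sem L2) = sem (mulL L1 L2).
Proof.
elim: L1 => [|p L1 IH] H1 H2.
  apply/ffunP => v; rewrite !ffunE /= big_nil big1 // => u _; apply: big1 => u' _.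
  by rewrite ffunE big_nil mul0r.
case/andP: H1 => Hp H1.
by rewrite sem_cons qw_mulDl mul_single // IH //= sem_cat.
Qed.

Definition XXL (g : Iroot) : seq (Q * {perm Iroot}) := [:: (y x g, 1%g); (- y x g, refl g)].

Fixpoint XL (a b : Iroot) (n : nat) : seq (Q * {perm Iroot}) :=
  match n with 0 => [:: (1, 1%g)] | n'.+1 => mulL (XXL a) (XL b a n') end.

Lemma XX_sem g : XX x g = sem (XXL g).
Proof.
apply/ffunP => v; rewrite /XX /qw_scale /qw_sub /qw_one /delta !ffunE /=.
rewrite !big_cons big_nil /=; ring.
Qed.

Lemma Xalt_sem n : forall a b, refl a \in W -> refl b \in W ->
  Xalt act x a b n = sem (XL a b n) /\ all inW (XL a b n).
Proof.
elim: n => [|n IH] a b Ha Hb.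
  split; last by rewrite /= /inW /= group1.
  apply/ffunP => v; rewrite /qw_one /delta !ffunE big_cons big_nil /=; ring.
have [E1 E2] := IH b a Hb Ha.
have HX : all inW (XXL a) by rewrite /= /inW /= group1 Ha.
split; last exact: inW_mulL.
by rewrite /= E1 XX_sem mul_sem.
Qed.

Definition Ev (kab kba : nat -> Q) v :=
  sem (XL ra rb 5) v - sem (XL rb ra 5) v =
  \sum_(1 <= i < 4) (kab i * sem (XL ra rb i) v - kba i * sem (XL rb ra i) v).

Lemma eval_big (r : seq nat) (P : pred nat) (F : nat -> QW Q) (v : {perm Iroot}) :
  (\big[@qw_add Q/[ffun => 0]]_(i <- r | P i) F i) v = \sum_(i <- r | P i) F i v.
Proof.
apply: (big_morph (fun f : QW Q => f v)); last by rewrite ffunE.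
by move=> f g; rewrite ffunE.
Qed.

Lemma kappaE kab kba : kappa_eq act x kab kba <-> forall v, Ev kab kba v.
Proof.
have Hra : refl ra \in W := sa_in.
have Hrb : refl rb \in W := sb_in.
rewrite /kappa_eq /Ev; split.
  move=> H v; move/ffunP/(_ v): H; rewrite eval_big ffunE.
  have [-> _] := Xalt_sem 5 Hra Hrb; have [-> _] := Xalt_sem 5 Hrb Hra.
  move=> ->; apply: eq_bigr => i _.
  have [-> _] := Xalt_sem i Hra Hrb; have [-> _] := Xalt_sem i Hrb Hra; by rewrite !ffunE.
move=> H; apply/ffunP => v; rewrite eval_big ffunE.
have [-> _] := Xalt_sem 5 Hra Hrb; have [-> _] := Xalt_sem 5 Hrb Hra.
rewrite H; apply: eq_bigr => i _.
have [-> _] := Xalt_sem i Hra Hrb; have [-> _] := Xalt_sem i Hrb Hra; by rewrite !ffunE.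
Qed.


Lemma actMa a b : act sa (a * b) = act sa a * act sa b. Proof. by rewrite actM // sa_in. Qed.
Lemma actMb a b : act sb (a * b) = act sb a * act sb b. Proof. by rewrite actM // sb_in. Qed.
Lemma actNa a : act sa (- a) = - act sa a. Proof. by rewrite actN // sa_in. Qed.
Lemma actNb a : act sb (- a) = - act sb a. Proof. by rewrite actN // sb_in. Qed.
Lemma actDa a b : act sa (a + b) = act sa a + act sa b. Proof. by rewrite actD // sa_in. Qed.
Lemma actDb a b : act sb (a + b) = act sb a + act sb b. Proof. by rewrite actD // sb_in. Qed.
Lemma act1a : act sa 1 = 1. Proof. by rewrite act1 // sa_in. Qed.
Lemma act1b : act sb 1 = 1. Proof. by rewrite act1 // sb_in. Qed.
Lemma actya g : act sa (y x g) = y x (sa g). Proof. by rewrite acty // sa_in. Qed.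
Lemma actyb g : act sb (y x g) = y x (sb g). Proof. by rewrite acty // sb_in. Qed.


Definition kab0 (i : nat) : Q := match i with
  | 3 => (y x (inord 3) * y x (inord 7) + - (y x (inord 3) * y x (inord 4)) + y x (inord 2) * y x (inord 6) + y x (inord 1) * y x (inord 5) + y x (inord 0) * y x (inord 4))
  | 2 => (y x (inord 2) * y x (inord 4) * y x (inord 8) + - (y x (inord 2) * y x (inord 4) * y x (inord 6)) + y x (inord 2) * y x (inord 3) * y x (inord 4) + y x (inord 1) * y x (inord 4) * y x (inord 7) + - (y x (inord 1) * y x (inord 4) * y x (inord 5)) + - (y x (inord 0) * y x (inord 1) * y x (inord 4)))
  | 1 => (- (y x (inord 1) * y x (inord 3) * y x (inord 5) * y x (inord 7)) + y x (inord 1) * y x (inord 3) * y x (inord 4) * y x (inord 5) + - (y x (inord 1) * y x (inord 2) * y x (inord 3) * y x (inord 4)) + - (y x (inord 0) * y x (inord 2) * y x (inord 4) * y x (inord 8)) + y x (inord 0) * y x (inord 1) * y x (inord 2) * y x (inord 4))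
  | _ => 0 end.
Definition kba0 (i : nat) : Q := match i with
  | 3 => (y x (inord 3) * y x (inord 9) + y x (inord 2) * y x (inord 8) + y x (inord 1) * y x (inord 7) + y x (inord 0) * y x (inord 4) + - (y x (inord 0) * y x (inord 1)))
  | 2 => (- (y x (inord 0) * y x (inord 3) * y x (inord 9)) + y x (inord 0) * y x (inord 3) * y x (inord 7) + - (y x (inord 0) * y x (inord 3) * y x (inord 4)) + - (y x (inord 0) * y x (inord 2) * y x (inord 8)) + y x (inord 0) * y x (inord 2) * y x (inord 6) + y x (inord 0) * y x (inord 1) * y x (inord 2))
  | 1 => (- (y x (inord 1) * y x (inord 3) * y x (inord 7) * y x (inord 9)) + - (y x (inord 0) * y x (inord 2) * y x (inord 4) * y x (inord 6)) + y x (inord 0) * y x (inord 2) * y x (inord 3) * y x (inord 4) + y x (inord 0) * y x (inord 1) * y x (inord 3) * y x (inord 9) + - (y x (inord 0) * y x (inord 1) * y x (inord 2) * y x (inord 3)))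
  | _ => 0 end.

Ltac norm_goal :=
  rewrite ?big_cons ?big_nil /=;
  rewrite -/sa -/sb ?act_id;
  repeat rewrite ?actMa ?actMb ?actNa ?actNb ?actDa ?actDb ?act1a ?act1b ?actya ?actyb;
  rewrite /ra /rb; repeat rewrite tabs;
  repeat rewrite ?wc1l ?wc1r ?saK ?sbK ?saa ?sbb ?braid.

Lemma exist0 v : Ev kab0 kba0 v.
Proof.
rewrite /Ev !semE /= big_ltn // big_ltn // big_ltn // big_geq // !semE.
norm_goal.
ring.
Qed.
Lemma inord_neq10 (a b : nat) : (a < 10)%N -> (b < 10)%N -> a != b -> (inord a != inord b :> Iroot).
Proof.
move=> Ha Hb Hab; apply/negP => /eqP /(congr1 val); rewrite /= !inordK // => E.
by rewrite E eqxx in Hab.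
Qed.

Ltac comp_ra := rewrite /wc ?permM ?perm1 /ra; repeat rewrite tabs; by apply: inord_neq10.

Ltac decide_eqs := repeat (rewrite eqxx || match goal with
  |- context [?u == ?w] => rewrite (@neqP u w); last by comp_ra end).

Lemma yU g : y x g \is a GRing.unit.
Proof. by rewrite /y unitrV. Qed.

Ltac evalsem := rewrite semE /=; norm_goal; decide_eqs; rewrite /= ?mulr1n ?mulr0n ?mulr1 ?mulr0 ?addr0 ?add0r.
Lemma z_aba_0 : sem (XL ra rb 2) (wc sa (wc sb sa)) = 0.
Proof. by evalsem. Qed.
Lemma z_aba_1 : sem (XL rb ra 2) (wc sa (wc sb sa)) = 0.
Proof. by evalsem. Qed.
Lemma z_aba_2 : sem (XL ra rb 1) (wc sa (wc sb sa)) = 0.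
Proof. by evalsem. Qed.
Lemma z_aba_3 : sem (XL rb ra 1) (wc sa (wc sb sa)) = 0.
Proof. by evalsem. Qed.
Lemma z_aba_4 : sem (XL rb ra 3) (wc sa (wc sb sa)) = 0.
Proof. by evalsem. Qed.
Lemma z_bab_0 : sem (XL ra rb 3) (wc sb (wc sa sb)) = 0.
Proof. by evalsem. Qed.
Lemma z_bab_1 : sem (XL ra rb 2) (wc sb (wc sa sb)) = 0.
Proof. by evalsem. Qed.
Lemma z_bab_2 : sem (XL rb ra 2) (wc sb (wc sa sb)) = 0.
Proof. by evalsem. Qed.
Lemma z_bab_3 : sem (XL ra rb 1) (wc sb (wc sa sb)) = 0.
Proof. by evalsem. Qed.
Lemma z_bab_4 : sem (XL rb ra 1) (wc sb (wc sa sb)) = 0.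
Proof. by evalsem. Qed.
Lemma z_ab_0 : sem (XL ra rb 1) (wc sa sb) = 0.
Proof. by evalsem. Qed.
Lemma z_ab_1 : sem (XL rb ra 1) (wc sa sb) = 0.
Proof. by evalsem. Qed.
Lemma z_ab_2 : sem (XL rb ra 2) (wc sa sb) = 0.
Proof. by evalsem. Qed.
Lemma z_ba_0 : sem (XL ra rb 1) (wc sb sa) = 0.
Proof. by evalsem. Qed.
Lemma z_ba_1 : sem (XL rb ra 1) (wc sb sa) = 0.
Proof. by evalsem. Qed.
Lemma z_ba_2 : sem (XL ra rb 2) (wc sb sa) = 0.
Proof. by evalsem. Qed.
Lemma z_b_0 : sem (XL ra rb 1) sb = 0.
Proof. by evalsem. Qed.
Lemma u_aba : sem (XL ra rb 3) (wc sa (wc sb sa)) \is a GRing.unit.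
Proof. evalsem. by rewrite ?unitrM ?unitrN ?yU ?unitr1. Qed.
Lemma u_bab : sem (XL rb ra 3) (wc sb (wc sa sb)) \is a GRing.unit.
Proof. evalsem. by rewrite ?unitrM ?unitrN ?yU ?unitr1. Qed.
Lemma u_ab : sem (XL ra rb 2) (wc sa sb) \is a GRing.unit.
Proof. evalsem. by rewrite ?unitrM ?unitrN ?yU ?unitr1. Qed.
Lemma u_ba : sem (XL rb ra 2) (wc sb sa) \is a GRing.unit.
Proof. evalsem. by rewrite ?unitrM ?unitrN ?yU ?unitr1. Qed.
Lemma u_b : sem (XL rb ra 1) sb \is a GRing.unit.
Proof. evalsem. by rewrite ?unitrM ?unitrN ?yU ?unitr1. Qed.

Ltac prep E := rewrite /Ev big_ltn // big_ltn // big_ltn // big_geq // in E.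
Ltac simp_in E := rewrite ?mulr0 ?subr0 ?sub0r ?add0r ?addr0 in E.

Lemma kba0_3 : kba0 3 = Sb03 act (y x ra * y x rb) - y x ra * salt act sb sa 3 (y x ra).
Proof. rewrite /Sb03 !big_ord_recr big_ord0 /=; norm_goal; rewrite /kba0; ring. Qed.

Lemma kab0_2 : kab0 2 =
          - (y x rb * (salt act sa sb 1 (y x ra * y x rb)
                       + salt act sa sb 2 (y x ra * y x rb)
                       - salt act sb sa 2 (y x ra * y x rb)
                       - salt act sb sa 3 (y x ra * y x rb)
                       + y x ra * salt act sb sa 3 (y x ra)
                       - salt act sa sb 2 (y x ra) * salt act sa sb 3 (y x rb))).
Proof. rewrite /=; norm_goal; rewrite /kab0; ring. Qed.

Lemma kba0_1 : kba0 1 =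
          - (salt act sb sa 1 (y x ra * y x rb) * salt act sb sa 3 (y x ra)
               * (salt act sb sa 3 (y x rb) - y x ra))
          - y x ra * y x rb * salt act sa sb 2 (y x ra)
               * (salt act sa sb 2 (y x rb) - salt act sa sb 3 (y x rb))
          - y x ra * salt act sb sa 1 (y x ra) * salt act sb sa 2 (y x rb)
               * salt act sb sa 3 (y x ra).
Proof. rewrite /=; norm_goal; rewrite /kba0; ring. Qed.

Lemma uniq0 kab kba : (forall v, Ev kab kba v) ->
  [/\ kab 3 = kab0 3, kba 3 = kba0 3, kab 2 = kab0 2, kba 2 = kba0 2 & kba 1 = kba0 1].
Proof.
move=> H.
have S v : Ev kab kba v /\ Ev kab0 kba0 v by split; [apply: H | apply: exist0].
have [E1 E0] := S (wc sa (wc sb sa)); prep E1; prep E0.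
rewrite ?z_aba_0 ?z_aba_1 ?z_aba_2 ?z_aba_3 ?z_aba_4 in E1 E0; simp_in E1; simp_in E0.
rewrite E0 in E1; have K3a := mulIr u_aba E1.
have [F1 F0] := S (wc sb (wc sa sb)); prep F1; prep F0.
rewrite ?z_bab_0 ?z_bab_1 ?z_bab_2 ?z_bab_3 ?z_bab_4 in F1 F0; simp_in F1; simp_in F0.
rewrite F0 in F1; have K3b := mulIr u_bab (oppr_inj F1).
have [G1 G0] := S (wc sa sb); prep G1; prep G0.
rewrite ?z_ab_0 ?z_ab_1 ?z_ab_2 in G1 G0; simp_in G1; simp_in G0.
rewrite -K3a -K3b G0 in G1; have K2a := mulIr u_ab (addIr _ G1).
have [I1 I0] := S (wc sb sa); prep I1; prep I0.
rewrite ?z_ba_0 ?z_ba_1 ?z_ba_2 in I1 I0; simp_in I1; simp_in I0.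
rewrite -K3a -K3b I0 in I1; have K2b := mulIr u_ba (oppr_inj (addIr _ I1)).
have [J1 J0] := S sb; prep J1; prep J0.
rewrite ?z_b_0 in J1 J0; simp_in J1; simp_in J0.
rewrite -K3a -K3b -K2a -K2b J0 in J1; have K1b := mulIr u_b (oppr_inj (addIr _ J1)).
by split.
Qed.

Lemma main_sec : (exists kab kba : nat -> Q, kappa_eq act x kab kba) /\
  (forall kab kba : nat -> Q, kappa_eq act x kab kba ->
    [/\ kba 3%N =
          Sb03 act (y x ra * y x rb) - y x ra * salt act sb sa 3 (y x ra),
        kab 2%N =
          - (y x rb * (salt act sa sb 1 (y x ra * y x rb)
                       + salt act sa sb 2 (y x ra * y x rb)
                       - salt act sb sa 2 (y x ra * y x rb)
                       - salt act sb sa 3 (y x ra * y x rb)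
                       + y x ra * salt act sb sa 3 (y x ra)
                       - salt act sa sb 2 (y x ra) * salt act sa sb 3 (y x rb)))
      & kba 1%N =
          - (salt act sb sa 1 (y x ra * y x rb) * salt act sb sa 3 (y x ra)
               * (salt act sb sa 3 (y x rb) - y x ra))
          - y x ra * y x rb * salt act sa sb 2 (y x ra)
               * (salt act sa sb 2 (y x rb) - salt act sa sb 3 (y x rb))
          - y x ra * salt act sb sa 1 (y x ra) * salt act sb sa 2 (y x rb)
               * salt act sb sa 3 (y x ra)]).
Proof.
split; first by exists kab0, kba0; apply/kappaE => v; apply: exist0.
move=> kab kba /kappaE /uniq0 [_ -> -> _ ->].
by rewrite kba0_3 kab0_2 kba0_1.
Qed.
End Main.

Theorem mainTheorem16 (Q : comUnitRingType) (act : {perm Iroot} -> Q -> Q) (x : Iroot -> Q)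
  (Hact : W_action act)
  (Hunit : forall g : Iroot, x g \is a GRing.unit)
  (Hequiv : forall w, w \in W -> forall g : Iroot, act w (x g) = x (w g)) :
  (exists kab kba : nat -> Q, kappa_eq act x kab kba) /\
  (forall kab kba : nat -> Q, kappa_eq act x kab kba ->
    [/\ kba 3%N =
          Sb03 act (y x ra * y x rb) - y x ra * salt act sb sa 3 (y x ra),
        kab 2%N =
          - (y x rb * (salt act sa sb 1 (y x ra * y x rb)
                       + salt act sa sb 2 (y x ra * y x rb)
                       - salt act sb sa 2 (y x ra * y x rb)
                       - salt act sb sa 3 (y x ra * y x rb)
                       + y x ra * salt act sb sa 3 (y x ra)
                       - salt act sa sb 2 (y x ra) * salt act sa sb 3 (y x rb)))
      & kba 1%N =
          - (salt act sb sa 1 (y x ra * y x rb) * salt act sb sa 3 (y x ra)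
               * (salt act sb sa 3 (y x rb) - y x ra))
          - y x ra * y x rb * salt act sa sb 2 (y x ra)
               * (salt act sa sb 2 (y x rb) - salt act sa sb 3 (y x rb))
          - y x ra * salt act sb sa 1 (y x ra) * salt act sb sa 2 (y x rb)
               * salt act sb sa 3 (y x ra)]).
Proof. exact: (main_sec Hact Hunit Hequiv). Qed.
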